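(* Let $n\ge0$, let $T\in\mathcal{T}_n$, and let $\pi=\varphi(T)$. Then $\operatorname{des}(\pi)=\operatorname{cdes}(T)$.
   Context: $\mathcal{T}_n$ is the set of plane (ordered) rooted trees with $n$ edges whose edges are labeled bijectively by $\{1,\dots,n\}$. For a non-root vertex $c$ whose edge to its parent has label $\ell$, define recursively $W(c)=\ell\,U\,\ell$, where $U$ is the concatenation of $W(c')$ over the children $c'$ of $c$ from left to right; $\varphi(T)$ is the concatenation of $W(c)$ over the children $c$ of the root from left to right (i.e. the sequence of edge labels recorded along a left-to-right depth-first walk, each edge recorded when traversed downward and upward). For a sequence $\pi_1\cdots\pi_r$, $i\in\{1,\dots,r\}$ is a descent if $\pi_i>\pi_{i+1}$ or $i=r$, and $\operatorname{des}(\pi)$ counts descents; the number of cyclic descents is $\operatorname{cdes}(\pi_1\cdots\pi_r)=|\{i\in\{1,\dots,r\}:\pi_i>\pi_{i+1}\}|$ with the convention $\pi_{r+1}=\pi_1$. For a vertex $v$ of $T$ whose children edges have labels $a_1,\dots,a_d$ from left to right: if $v$ is not the root and its parent edge has label $\ell$, $\operatorname{cdes}(v)=\operatorname{cdes}(\ell a_1\cdots a_d)$; if $v$ is the root, $\operatorname{cdes}(v)=\operatorname{des}(a_1\cdots a_d)$. Finally $\operatorname{cdes}(T)=\sum_v\operatorname{cdes}(v)$ over all vertices $v$ of $T$. *)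

(* Defs.v *)
From mathcomp Require Import all_boot.
Set Implicit Arguments. Unset Strict Implicit. Unset Printing Implicit Defensive.

(* A non-root vertex of a plane rooted tree, together with the label of the
   edge to its parent and the ordered (left-to-right) list of its children. *)
Inductive ltree : Type := LT (lab : nat) (children : seq ltree).

(* A plane rooted tree with labeled edges = ordered list of the root's children. *)
Definition ptree := seq ltree.

Definition lab (t : ltree) : nat := let: LT l _ := t in l.

Fixpoint labels (t : ltree) : seq nat :=
  let: LT l cs := t in l :: flatten (map labels cs).

Definition tree_labels (T : ptree) : seq nat := flatten (map labels T).

Definition in_Tn (n : nat) (T : ptree) : Prop := perm_eq (tree_labels T) (iota 1 n).

Fixpoint W (t : ltree) : seq nat :=
  let: LT l cs := t in l :: rcons (flatten (map W cs)) l.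

Definition phi (T : ptree) : seq nat := flatten (map W T).

(* des: positions i (0-based here) with s_i > s_{i+1} or i the last position *)
Definition des (s : seq nat) : nat :=
  \sum_(i < size s) ((i.+1 == size s) || (nth 0 s i.+1 < nth 0 s i)).

Definition cdes (s : seq nat) : nat :=
  \sum_(i < size s) (nth 0 s (i.+1 %% size s) < nth 0 s i).

(* sum of cdes(v) over all vertices v of the subtree rooted at the child c *)
Fixpoint cdes_sub (t : ltree) : nat :=
  let: LT l cs := t in cdes (l :: map lab cs) + sumn (map cdes_sub cs).

Definition cdes_tree (T : ptree) : nat := des (map lab T) + sumn (map cdes_sub T).

(* Main.v *)
Require Import Defs.
From mathcomp Require Import all_boot.
From mathcomp Require Import zify.

Fixpoint adj (s : seq nat) : nat :=
  match s with
  | x :: ((y :: _) as t) => (y < x) + adj t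
  | _ => 0
  end.

Definition jn (s t : seq nat) : nat :=
  [&& s != [::], t != [::] & head 0 t < last 0 s].

Lemma adj_cat s1 s2 : adj (s1 ++ s2) = adj s1 + adj s2 + jn s1 s2.
Proof.
elim: s1 => [|x s1 IH]; first by rewrite /jn /= addn0.
case: s1 IH => [|y s1] IH.
  by case: s2 {IH} => [|z s2] //=; rewrite /jn /= addnC.
rewrite cat_cons.
have -> : adj (x :: (y :: s1) ++ s2) = (y < x) + adj ((y :: s1) ++ s2) by [].
have -> : adj (x :: y :: s1) = (y < x) + adj (y :: s1) by [].
rewrite IH /jn /= -!addnA.
done.
Qed.

Lemma adj_sum s : adj s = \sum_(i < (size s).-1) (nth 0 s i.+1 < nth 0 s i).
Proof.
elim: s => [|x s IH]; first by rewrite big_ord0.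
case: s IH => [|y s] IH; first by rewrite big_ord0.
have -> : adj (x :: y :: s) = (y < x) + adj (y :: s) by [].
by rewrite IH [in RHS]big_ord_recl.
Qed.

Lemma des_adj s : des s = adj s + (0 < size s).
Proof.
elim: s => [|x s IH]; first by rewrite /des big_ord0.
rewrite /des /= big_ord_recl /=.
rewrite -/(des s).
rewrite IH.
case: s {IH} => [|y s] /=; first by [].
by rewrite addnA addn1 addnC.
Qed.

Lemma cdes_adj x s : cdes (x :: s) = adj (x :: s) + (x < last x s).
Proof.
rewrite (adj_sum (x :: s)) /cdes big_ord_recr /= modnn /=.
congr (_ + _); last first.
  by case: s => [|y s] //=; rewrite (last_nth 0) /=.
apply: eq_bigr => i _ /=.
by rewrite modn_small // ltnS ltn_ord.
Qed.

Section Ind.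
Variable P : ltree -> Prop.
Fixpoint allP (cs : seq ltree) : Prop :=
  match cs with [::] => True | c :: cs => P c /\ allP cs end.
Hypothesis H : forall l cs, allP cs -> P (LT l cs).
Fixpoint ltree_ind' (t : ltree) : P t :=
  match t with
  | LT l cs => H l cs ((fix F cs := match cs return allP cs with
                      | [::] => I
                      | c :: cs => conj (ltree_ind' c) (F cs) end) cs)
  end.
End Ind.

Lemma W_ends t : exists s, W t = lab t :: rcons s (lab t).
Proof. by case: t => l cs /=; eexists. Qed.

Lemma flat_props (cs : seq ltree) :
  let F := flatten (map W cs) in
  [/\ (F == [::]) = (size cs == 0) , head 0 F = head 0 (map lab cs)
    & last 0 F = last 0 (map lab cs)].
Proof.
elim: cs => [|c cs [IH1 IH2 IH3]] //=.
have [s ->] := W_ends c.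
split => //=.
rewrite last_cat last_rcons.
case: cs IH1 IH2 IH3 => [|c' cs] //= _ _.
have [s' E] := W_ends c'; rewrite E /=.
by [].
Qed.

Lemma adj_flat cs :
  adj (flatten (map W cs)) = sumn (map (fun c => adj (W c)) cs) + adj (map lab cs).
Proof.
elim: cs => [|c cs IH] //=.
change (adj (W c ++ flatten (map W cs)) = adj (W c) + sumn (map (fun c => adj (W c)) cs) + adj ([:: lab c] ++ map lab cs)).
rewrite adj_cat IH.
have [s E] := W_ends c.
have [H1 H2 _] := flat_props cs.
have Hj : jn (W c) (flatten (map W cs)) = jn [:: lab c] (map lab cs).
  rewrite /jn E /= last_rcons.
  case: cs H1 H2 {IH} => [|c' cs] //= H1 H2.
  by rewrite H1 H2.
rewrite (adj_cat [:: lab c]) Hj /=.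
lia.
Qed.

Lemma adj_W t : adj (W t) = cdes_sub t.
Proof.
elim/ltree_ind': t => l cs Hcs.
change (adj (l :: rcons (flatten (map W cs)) l) = cdes (l :: map lab cs) + sumn (map cdes_sub cs)).
have -> : l :: rcons (flatten (map W cs)) l = [:: l] ++ (flatten (map W cs) ++ [:: l]).
  by rewrite cats1.
rewrite !adj_cat adj_flat cdes_adj -(cat1s l (map lab cs)) (adj_cat [:: l]).
have -> : sumn (map (fun c => adj (W c)) cs) = sumn (map cdes_sub cs).
  by elim: cs Hcs => [|c cs IH] //= [-> /IH ->].
have [H1 H2 H3] := flat_props cs.
set F := flatten (map W cs) in H1 H2 H3 *. clearbody F.
rewrite /jn.
case: cs H1 H2 H3 {Hcs} => [|c cs] /= H1 H2 H3.
  by move/eqP: H1 => -> /=; rewrite ltnn.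
case: F H1 H2 H3 => [|f F] //= _ -> H3.
rewrite H3; lia.
Qed.


Theorem lemma2p1 (n : nat) (T : ptree) :
  in_Tn n T -> des (phi T) = cdes_tree T.
Proof.
move=> _.
rewrite /cdes_tree /phi !des_adj adj_flat.
have -> : sumn (map (fun c => adj (W c)) T) = sumn (map cdes_sub T).
  by elim: T => [|c cs IH] //=; rewrite adj_W IH.
have [H1 _ _] := flat_props T.
rewrite size_map.
case: T H1 => [|c T] /=; first by [].
have [s ->] := W_ends c; rewrite /= => _; lia.
Qed.
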